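(* Let $L \geq 1$, $m = L+1$, $\gamma = (L+1)^3$, and for $i \in \{0,\ldots,L\}$ and $k \in [m]$ define $$w_i(k) = \gamma^{2(i+1)k - k^2 + 1} + \sum_{r=0}^L \gamma^{(2r+1)(i+1) - r^2 - r}, \qquad \pi_i(A_k) = \frac{w_i(k)}{\sum_{h=1}^m w_i(h)}.$$ Then for every $i \in \{0,\ldots,L\}$, $\pi_i(A_{i+1}) > 1 - \frac{1}{L+1}$, and for every $k \in [m]$ with $k \neq i+1$, $\frac{1}{2(L+1)^3} < \pi_i(A_k) < \frac{1}{(L+1)^2}$.
   Context: These numbers are the masses of the modes $A_k$ at level $i$ in the paper's construction of a multimodal target (with cross terms between well-separated modes neglected); here they are simply defined by the displayed formula. *)

(* Defs.v *)
From HB Require Import structures.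
From mathcomp Require Import all_boot all_order all_algebra.
Set Implicit Arguments. Unset Strict Implicit. Unset Printing Implicit Defensive.
Import Order.TTheory GRing.Theory Num.Theory.
Local Open Scope ring_scope.

Definition gam (R : realFieldType) (L : nat) : R := ((L.+1 ^ 3)%N)%:R.

Definition wgt (R : realFieldType) (L i k : nat) : R :=
  gam R L ^ (2%:Z * (i%:Z + 1) * k%:Z - k%:Z ^+ 2 + 1)
  + \sum_(0 <= r < L.+1)
      gam R L ^ ((2%:Z * r%:Z + 1) * (i%:Z + 1) - r%:Z ^+ 2 - r%:Z).

Definition piA (R : realFieldType) (L i k : nat) : R :=
  wgt R L i k / \sum_(1 <= h < L.+2) wgt R L i h.

(* Main.v *)
Require Import Defs.
From HB Require Import structures.
From mathcomp Require Import all_boot all_order all_algebra.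
From mathcomp Require Import zify ring lra.
Import Order.TTheory GRing.Theory Num.Theory.
Local Open Scope ring_scope.

Section Helpers.
Variable R : realFieldType.

Lemma sum_ge1 (F : nat -> R) (r : seq nat) j :
  j \in r -> uniq r -> (forall x, 0 <= F x) -> F j <= \sum_(x <- r) F x.
Proof.
move=> jr ur F0; rewrite (bigD1_seq j) //= lerDl.
by apply: sumr_ge0 => x _.
Qed.

Lemma sum_ge2 (F : nat -> R) (r : seq nat) j k :
  j \in r -> k \in r -> k != j -> uniq r -> (forall x, 0 <= F x) ->
  F j + F k <= \sum_(x <- r) F x.
Proof.
move=> jr kr kj ur F0; rewrite (bigD1_seq j) //= lerD2l -big_filter.
apply: sum_ge1 => //; first by rewrite mem_filter kj.
exact: filter_uniq.
Qed.

Lemma sum_le (F : nat -> R) (r : seq nat) j c :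
  j \in r -> uniq r -> (forall x, x != j -> F x <= c) -> 0 <= c ->
  \sum_(x <- r) F x <= F j + \sum_(x <- r) c.
Proof.
move=> jr ur Fc c0; rewrite (bigD1_seq j) //= lerD2l big_mkcond /=.
apply: ler_sum => x _; case: ifP => // xj; exact: Fc.
Qed.

Lemma ltdiv (a b c d : R) : 0 < b -> 0 < d -> a * d < c * b -> a / b < c / d.
Proof. by move=> b0 d0 h; rewrite ltr_pdivrMr // mulrAC ltr_pdivlMr. Qed.

End Helpers.

Theorem lemma11 (R : realFieldType) (L : nat) (hL : (1 <= L)%N) :
  forall i : nat, (i <= L)%N ->
    1 - 1 / (L.+1)%:R < piA R L i i.+1 /\
    (forall k : nat, (1 <= k <= L.+1)%N -> k != i.+1 ->
       1 / (2 * (L.+1)%:R ^+ 3) < piA R L i k /\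
       piA R L i k < 1 / (L.+1)%:R ^+ 2).
Proof.
move=> i hi.
set N : R := (L.+1)%:R.
have N2 : 2 <= N by rewrite /N ler_nat; lia.
set g := gam R L.
have gN : g = N ^+ 3 by rewrite /g /gam natrX.
have g1 : 1 <= g by rewrite gN; nra.
have g0 : 0 < g by lra.
have gn0 : g != 0 by rewrite gt_eqF.
set P := g ^ ((i%:Z + 1) ^+ 2).
have P0 : 0 < P by exact: exprz_gt0.
set A := fun k : nat => g ^ (2%:Z * (i%:Z + 1) * k%:Z - k%:Z ^+ 2 + 1).
set T := fun r : nat => g ^ ((2%:Z * r%:Z + 1) * (i%:Z + 1) - r%:Z ^+ 2 - r%:Z).
set S := \sum_(0 <= r < L.+1) T r.
have wE : forall k, wgt R L i k = A k + S by [].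
have A0 : forall k, 0 < A k by move=> k; exact: exprz_gt0.
have Aj : A i.+1 = g * P.
  rewrite /A /P.
  have -> : 2%:Z * (i%:Z + 1) * (i.+1)%:Z - (i.+1)%:Z ^+ 2 + 1
            = (i%:Z + 1) ^+ 2 + 1 by rewrite !expr2; lia.
  by rewrite expfzDr // expr1z mulrC.
have Ak : forall k, k != i.+1 -> A k <= P.
  move=> k hk; apply: ler_weXz2l => //.
  rewrite !expr2; have [h|h] : (k < i.+1)%N \/ (i.+1 < k)%N by lia.
  nia. nia.
have T0 : forall r, 0 <= T r by move=> r; apply: exprz_ge0; lra.
have TP : forall r, T r <= P.
  move=> r; apply: ler_weXz2l => //.
  rewrite !expr2; have [h|h] : (r <= i)%N \/ (i < r)%N by lia. nia. nia.
have Ti : T i = P.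
  rewrite /T /P; congr (_ ^ _); rewrite !expr2; lia.
have S1 : P <= S.
  rewrite -Ti /S; apply: sum_ge1 => //.
    by rewrite mem_index_iota; lia.
  exact: iota_uniq.
have S2 : S <= N * P.
  rewrite /S (le_trans (ler_sum _ (fun r _ => TP r))) //.
  by rewrite sumr_const_nat subn0 -mulr_natl.
set X := \sum_(1 <= h < L.+2) A h.
have DE : \sum_(1 <= h < L.+2) wgt R L i h = X + N * S.
  under eq_bigr do rewrite wE.
  by rewrite big_split /= sumr_const_nat mulr_natl.
have X1 : X <= g * P + N * P.
  rewrite /X -Aj.
  have mj : i.+1 \in index_iota 1 L.+2 by rewrite mem_index_iota; lia.
  have hP : 0 <= P by lra.
  apply: le_trans (@sum_le R A (index_iota 1 L.+2) i.+1 P mj (iota_uniq _ _) Ak hP) _.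
  by rewrite sumr_const_nat -mulr_natl /N; have -> : (L.+2 - 1 = L.+1)%N by lia.
have X2 : forall k, (1 <= k <= L.+1)%N -> k != i.+1 -> g * P + A k <= X.
  move=> k hk kj; rewrite -Aj /X; apply: sum_ge2 => //.
  - by rewrite mem_index_iota; lia.
  - by rewrite mem_index_iota; lia.
  - exact: iota_uniq.
  - by move=> x; apply: ltW.
have S0 : 0 < S by lra.
have X0 : 0 <= X by apply: sumr_ge0 => h _; apply: ltW.
have D0 : 0 < X + N * S by nra.
rewrite /piA DE; split.
  have -> : 1 - 1 / N = (N - 1) / N by field; lra.
  apply: ltdiv => //.
  rewrite wE Aj.
  have h1 : (N - 1) * X <= (N - 1) * (g * P + N * P) by apply: ler_wpM2l => //; lra.
  have h2 : (N * N - 2 * N) * S <= (N * N - 2 * N) * (N * P) by apply: ler_wpM2l => //; nra.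
  rewrite gN; rewrite gN in h1; nra.
move=> k hk kj.
have Ak0 := A0 k; have Akl := Ak k kj; have Xk := X2 k hk kj.
split.
  by rewrite wE; apply: ltdiv => //; nra.
by rewrite wE; apply: ltdiv => //; nra.
Qed.
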